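(* Let $1\le k<n$, let $\kappa_1,\dots,\kappa_n\in\mathbb C$ be pairwise distinct and $\beta_1,\dots,\beta_{n-1}\in\mathbb C^*$, with $\beta_0:=1$, and $I_k=\{1,\dots,k\}$. Let $A$ be the $k\times n$ matrix with $A_{ij}=\delta_{ij}$ for $j\le k$ and $$A_{ij}=\frac{\beta_{i-1}}{\beta_{j-1}(\kappa_j-\kappa_i)^2}\prod_{l\in I_k,\,l\ne i}\frac{\kappa_i-\kappa_l}{\kappa_j-\kappa_l}\qquad (i\le k<j\le n).$$ For every $k$-subset $J\subset[n]$, write $J=(I_k\setminus\{i_1,\dots,i_s\})\cup\{j_1,\dots,j_s\}$ with $i_1<\dots<i_s$ in $I_k$, $j_1<\dots<j_s$ in $[n]\setminus I_k$, $0\le s\le\min\{k,n-k\}$, and set $$\alpha_J=\frac{\prod_{1\le l<m\le s}(\kappa_{i_m}-\kappa_{i_l})^2(\kappa_{j_m}-\kappa_{j_l})^2}{\prod_{1\le l,m\le s}(\kappa_{j_m}-\kappa_{i_l})^2}\prod_{l=1}^s\frac{\beta_{i_l-1}}{\beta_{j_l-1}}$$ (empty products equal $1$). Then the maximal minor of $A$ on columns $J$ satisfies $A_J=\alpha_J\,K_{I_k}/K_J$, where $K_J=\prod_{i<j,\ i,j\in J}(\kappa_j-\kappa_i)$.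
   Context: Here $n=g+1$ for the genus-$g$ banana graph; $\alpha_J$ are the coefficients $\exp[\tfrac12\mathbf c_J^TR\mathbf c_J]\exp[\mathbf c_J^T\mathbf D]$ of the degenerate theta function at the Delaunay vertex $\mathbf c_J$, with $\mathbf D=(\log\beta_1,\dots,\log\beta_g)$, written explicitly. *)

(* Defs.v *)
From HB Require Import structures.
From mathcomp Require Import all_boot all_order all_algebra.
From mathcomp Require Import complex reals.
Set Implicit Arguments. Unset Strict Implicit. Unset Printing Implicit Defensive.
Import Order.TTheory GRing.Theory Num.Theory.
Local Open Scope ring_scope.

(* Indices are 0-based: paper index p in [n] corresponds to p-1 here.
   kappa m  = kappa_{m+1};  beta m = beta_m (so beta 0 = 1 and column/row index m
   carries beta_{(m+1)-1} = beta m). *)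

Section Defs.
Variable F : fieldType.
Variables (k n : nat) (kappa beta : nat -> F).

Definition matA : 'M[F]_(k, n) :=
  \matrix_(i < k, j < n)
    if (j < k)%N then (i == j :> nat)%:R
    else beta i / (beta j * (kappa j - kappa i) ^+ 2) *
         \prod_(l < k | l != i) ((kappa i - kappa l) / (kappa j - kappa l)).

(* maximal minor of M on the columns of J (taken in increasing order) *)
Definition maxminor (M : 'M[F]_(k, n)) (J : {set 'I_n}) (HJ : #|J| = k) : F :=
  \det (colsub (fun i : 'I_k => enum_val (cast_ord (esym HJ) i)) M).

Definition Ik : {set 'I_n} := [set j : 'I_n | (j < k)%N].

Definition KK (J : {set 'I_n}) : F :=
  \prod_(a in J) \prod_(b in J | (a < b)%N) (kappa b - kappa a).

Definition alpha (J : {set 'I_n}) : F :=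
  let Rm := Ik :\: J in
  let Ad := J :\: Ik in
  (\prod_(a in Rm) \prod_(b in Rm | (a < b)%N) (kappa b - kappa a) ^+ 2) *
  (\prod_(a in Ad) \prod_(b in Ad | (a < b)%N) (kappa b - kappa a) ^+ 2) /
  (\prod_(a in Rm) \prod_(b in Ad) (kappa b - kappa a) ^+ 2) *
  ((\prod_(a in Rm) beta a) / (\prod_(b in Ad) beta b)).
End Defs.

(* Main.v *)
Require Import Defs.
From HB Require Import structures.
From mathcomp Require Import all_boot all_order all_algebra.
From mathcomp Require Import complex reals.
From mathcomp Require Import ring.
Set Implicit Arguments. Unset Strict Implicit. Unset Printing Implicit Defensive.
Import Order.TTheory GRing.Theory Num.Theory.
Local Open Scope ring_scope.

Section Part1.
Variable F : fieldType.
Variables (k : nat) (kappa : nat -> F).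

Definition qq (j : nat) : F := \prod_(l < k | (l : nat) != j) (kappa j - kappa l).
Definition Wm (y : 'I_k -> F) : 'M[F]_k :=
  \matrix_(i, p) \prod_(l < k | (l : nat) != i) (y p - kappa l).
Definition Pol (i : 'I_k) : {poly F} := \prod_(l < k | (l : nat) != i) ('X - (kappa l)%:P).
Definition Lm : 'M[F]_k := \matrix_(i, m) (Pol i)`_m.
Definition Vd (y : 'I_k -> F) : 'M[F]_k := Vandermonde k (\row_p y p).

Lemma size_Pol i : (size (Pol i) <= k)%N.
Proof.
rewrite /Pol -big_filter size_prod_XsubC size_filter [index_enum _]unlock -enumT.
have H1 : (0 < count (predC (fun l : 'I_k => (l : nat) != i)) (enum 'I_k))%N.
  rewrite -has_count; apply/hasP; exists i; first by rewrite mem_enum.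
  by rewrite /= eqxx.
have H2 := count_predC (fun l : 'I_k => (l : nat) != i) (enum 'I_k).
move: H1 H2; set e := enum 'I_k; have -> : size e = k by apply: size_enum_ord.
move=> H1 H2.
have H3 : forall a b c : nat, (0 < b)%N -> a + b = c -> (a < c)%N.
  by move=> a b c hb <-; rewrite -[ltnLHS]addn0 ltn_add2l.
exact: H3 H1 H2.
Qed.

Lemma Wm_factor y : Wm y = Lm *m Vd y.
Proof.
apply/matrixP => i p; rewrite !mxE.
transitivity (Pol i).[y p].
  by rewrite /Pol horner_prod; apply: eq_bigr => l _; rewrite hornerXsubC.
rewrite (horner_coef_wide _ (size_Pol i)).
by apply: eq_bigr => m _; rewrite !mxE.
Qed.

Definition xk : 'I_k -> F := fun p => kappa p.

Lemma Wm_id : Wm xk = diag_mx (\row_i qq i).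
Proof.
apply/matrixP => i j; rewrite !mxE.
have [->|hij] := eqVneq i j; first by rewrite ?eqxx mulr1n.
rewrite mulr0n (bigD1 j) /=; last by apply/eqP => /val_inj /eqP; rewrite eq_sym (negbTE hij).
by rewrite /xk subrr mul0r.
Qed.

Lemma det_Wm y : \det (Wm y) * \det (Vd xk) = (\prod_(i < k) qq i) * \det (Vd y).
Proof.
have h1 := congr1 determinant (Wm_factor y); rewrite det_mulmx in h1.
have h2 := congr1 determinant (Wm_factor xk); rewrite det_mulmx Wm_id det_diag in h2.
have h3 : \prod_(i < k) (\row_(i0 < k) qq i0) 0 i = \prod_(i < k) qq i by apply: eq_bigr => i _; rewrite mxE.
by rewrite h1 -h3 h2; ring.
Qed.
End Part1.


Section Part2.
Variable F : fieldType.
Variables (k n : nat) (kappa beta : nat -> F).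
Hypothesis hkn : (k <= n)%N.
Hypothesis hkap : forall a b : nat, (a < n)%N -> (b < n)%N -> kappa a = kappa b -> a = b.
Hypothesis hbet : forall m : nat, (m < n)%N -> beta m != 0.

Lemma dk_neq0 a b : (a < n)%N -> (b < n)%N -> a != b -> kappa a - kappa b != 0.
Proof. by move=> ha hb hab; rewrite subr_eq0; apply/eqP => /(hkap ha hb) /eqP; rewrite (negbTE hab). Qed.

Lemma qq_neq0 j : (j < n)%N -> qq k kappa j != 0.
Proof.
move=> hj; apply/prodf_neq0 => l hl; apply: dk_neq0 => //; first exact: leq_trans (ltn_ord l) hkn.
by rewrite eq_sym.
Qed.

Lemma colsub_A (c : 'I_k -> 'I_n) :
  colsub c (matA k n kappa beta) =
  diag_mx (\row_(i < k) (beta i * qq k kappa i)) *m Wm kappa (fun p => kappa (c p))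
    *m diag_mx (\row_(p < k) (beta (c p) * qq k kappa (c p) ^+ 2)^-1).
Proof.
apply/matrixP => i p; rewrite mul_mx_diag mul_diag_mx !mxE.
have hi : (i < n)%N by exact: leq_trans (ltn_ord i) hkn.
have hbi := hbet hi; have hqi := qq_neq0 hi.
have hcp := ltn_ord (c p); have hbc := hbet hcp; have hqc := qq_neq0 hcp.
case: ifP => hck.
- have [hij|hij] := eqVneq (i : nat) (c p).
  + 
    have -> : \prod_(l < k | (l : nat) != i) (kappa (c p) - kappa l) = qq k kappa (c p).
      by rewrite /qq; apply: eq_bigl => l; rewrite hij.
    rewrite -hij (_ : true%:R = 1 :> F) //; field; by rewrite hbi hqi.
  + rewrite (bigD1 (Ordinal hck)) /=; last by rewrite eq_sym.
    by rewrite subrr !mul0r mulr0 mul0r.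
- set w := \prod_(l < k | (l : nat) != i) (kappa (c p) - kappa l).
  have hqi' : \prod_(l < k | l != i) (kappa i - kappa l) = qq k kappa i.
    by rewrite /qq; apply: eq_bigl => l.
  have hw : \prod_(l < k | l != i) (kappa (c p) - kappa l) = w.
    by rewrite /w; apply: eq_bigl => l.
  have hqc' : qq k kappa (c p) = (kappa (c p) - kappa i) * w.
    rewrite /qq (eq_bigl predT); last first.
      move=> l /=; apply/negP => /eqP hl; by move: (ltn_ord l); rewrite hl hck.
    rewrite (bigD1 i) //=; congr (_ * _); rewrite /w; apply: eq_bigl => l.
  have hd : kappa (c p) - kappa i != 0.
    by apply: dk_neq0 => //; apply/eqP => h; move: hck; rewrite h ltn_ord.
  have hw0 : w != 0.
    by apply: contraNneq hqc => hw0; rewrite hqc' hw0 mulr0.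
  rewrite prodf_div hqi' hw hqc'.
  field. by rewrite hw0 hd hbc.
Qed.
End Part2.


Lemma enum_sorted n (A : {set 'I_n}) : sorted (fun a b : 'I_n => (a < b)%N) (enum A).
Proof.
have -> : enum A = filter (mem A) (enum 'I_n).
  rewrite enumT /enum_mem. reflexivity.
apply: sorted_filter; first by move=> a b c; exact: ltn_trans.
by have := iota_ltn_sorted 0 n; rewrite -val_enum_ord sorted_map.
Qed.

Lemma enum_val_mono n (A : {set 'I_n}) (i j : 'I_#|A|) : (enum_val i < enum_val j)%N = (i < j)%N.
Proof.
have hs := enum_sorted A.
have hsz : size (enum A) = #|A| by exact: esym (cardE _).
have x0 : 'I_n := enum_val i.
have H : forall a b : 'I_#|A|, (a < b)%N -> (enum_val a < enum_val b)%N.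
  move=> a b hab; rewrite (enum_val_nth x0 a) (enum_val_nth x0 b).
  apply: (sorted_ltn_nth _ x0 hs) => //.
  - by move=> ? ? ?; exact: ltn_trans.
  - by rewrite inE hsz ltn_ord.
  - by rewrite inE hsz ltn_ord.
case: (ltngtP i j) => hij; first by rewrite H.
- by apply/negbTE; rewrite -leqNgt ltnW // H.
- have -> : j = i by apply: val_inj.
  by rewrite ltnn.
Qed.

Lemma Vd_J (F : fieldType) n (kappa : nat -> F) (J : {set 'I_n}) :
  \det (Vd (fun p : 'I_#|J| => kappa (enum_val p))) = KK kappa J.
Proof.
rewrite /Vd det_Vandermonde /KK (big_enum_val (A := mem J)) /=.
apply: eq_bigr => i _.
rewrite (big_enum_val_cond (A := mem J)) /=.
apply: eq_big => [j|j _]; first by rewrite enum_val_mono.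
by rewrite !mxE.
Qed.

Lemma Vd_Ik (F : fieldType) k n (kappa : nat -> F) : (k <= n)%N ->
  \det (Vd (@xk F k kappa)) = KK kappa (Ik k n).
Proof.
move=> hkn.
rewrite /Vd det_Vandermonde /KK /Ik.
rewrite (eq_bigl (fun a : 'I_n => true && (a < k)%N)); last by move=> a; rewrite inE.
rewrite -(@big_ord_widen_cond _ _ _ k n (fun _ => true) (fun a : nat => \prod_(b < n | (b \in [set j : 'I_n | (j < k)%N]) && (a < b)%N) (kappa b - kappa a)) hkn).
apply: eq_bigr => i _.
rewrite (eq_bigl (fun b : 'I_n => (i < b)%N && (b < k)%N)); last by move=> b; rewrite inE andbC.
rewrite -(@big_ord_widen_cond _ _ _ k n (fun b : nat => (i < b)%N) (fun b : nat => (kappa b - kappa i)) hkn).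
by apply: eq_bigr => j _; rewrite !mxE.
Qed.


Section Part4.
Variable F : fieldType.
Variables (n : nat) (kappa : nat -> F).

Definition dd (a b : nat) : F := (kappa b - kappa a) ^+ 2.
Lemma dd_sym a b : dd a b = dd b a.
Proof. by rewrite /dd -opprB sqrrN. Qed.

Definition CC (X Y : {set 'I_n}) : F := \prod_(a in X) \prod_(b in Y | (a < b)%N) dd a b.
Definition Pn (X Y : {set 'I_n}) : F := \prod_(a in X) \prod_(b in Y | b != a) dd b a.

Lemma Pn_CC X Y : Pn X Y = CC X Y * CC Y X.
Proof.
rewrite /Pn /CC.
rewrite [X in _ = _ * X](exchange_big_dep (fun b => b \in X)) /=; last first.
  by move=> i j _ /andP [].
rewrite -big_split /=.
apply: eq_bigr => a aX.
rewrite (bigID (fun b : 'I_n => (a < b)%N)) /=.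
congr (_ * _).
- apply: eq_big => [b|b _]; last exact: dd_sym.
  apply/andP/andP => [[/andP [h1 h2] h3]|[h1 h3]]; first by split.
  split => //; apply/andP; split => //.
  by apply/eqP => hb; move: h3; rewrite hb ltnn.
- apply: eq_bigl => b.
  apply/andP/andP => [[/andP [h1 h2] h3]|[h1 h3]].
  + split => //; rewrite ltn_neqAle; rewrite -leqNgt in h3; rewrite h3 andbT aX /=.
    exact: h2.
  + move/andP: h3 => [_ h3].
    split; first (apply/andP; split => //).
    * by apply/eqP => hb; move: h3; rewrite hb ltnn.
    * by rewrite -leqNgt ltnW.
Qed.

Lemma CC_splitl X Y B : CC X Y = CC (X :&: B) Y * CC (X :\: B) Y.
Proof. by rewrite /CC (big_setID B). Qed.

Lemma CC_splitr X Y B : CC X Y = CC X (Y :&: B) * CC X (Y :\: B).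
Proof. by rewrite /CC -big_split /=; apply: eq_bigr => a _; rewrite (big_setIDcond _ _ B). Qed.

Lemma KK_sq X : KK kappa X ^+ 2 = CC X X.
Proof.
rewrite /KK /CC -prodrXl; apply: eq_bigr => a _; rewrite -prodrXl.
by apply: eq_bigr.
Qed.

Lemma qq_sq k (a : 'I_n) : (k <= n)%N ->
  qq k kappa a ^+ 2 = \prod_(l in Ik k n | l != a) dd l a.
Proof.
move=> hkn; rewrite /qq -prodrXl.
rewrite (@big_ord_widen_cond _ _ _ k n (fun l : nat => l != a) (fun l : nat => dd l a) hkn).
apply: eq_bigl => l; rewrite /Ik inE andbC; congr (_ && _).
Qed.
End Part4.



Lemma sq_trick (F : fieldType) (X Y u v : F) : u != 0 -> v != 0 ->
  X * u ^+ 2 = Y * v ^+ 2 -> X * u / v = Y * v / u.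
Proof.
move=> hu hv h.
have -> : X * u / v = (X * u ^+ 2) / (u * v) by field; rewrite hu hv.
rewrite h; field; by rewrite hu hv.
Qed.

Lemma cross_CC (F : fieldType) n (kappa : nat -> F) (X Y : {set 'I_n}) :
  (forall a b, a \in X -> b \in Y -> b != a) ->
  \prod_(a in X) \prod_(b in Y) (kappa b - kappa a) ^+ 2 = CC kappa X Y * CC kappa Y X.
Proof.
move=> hXY; rewrite -Pn_CC /Pn; apply: eq_bigr => a aX.
apply: eq_big => [b|b _]; last by rewrite dd_sym.
case bY: (b \in Y) => //=; by rewrite hXY.
Qed.

Definition Bt (F : fieldType) n (beta : nat -> F) (X : {set 'I_n}) := \prod_(a in X) beta a.

Theorem proposition5p2 (R : realType) (k n : nat) (kappa beta : nat -> R[i])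
  (hk : (1 <= k)%N) (hkn : (k < n)%N)
  (hkappa : forall a b : nat, (a < n)%N -> (b < n)%N -> kappa a = kappa b -> a = b)
  (hbeta0 : beta 0%N = 1)
  (hbeta : forall m : nat, (0 < m < n)%N -> beta m != 0)
  (J : {set 'I_n}) (HJ : #|J| = k) :
  maxminor (matA k n kappa beta) HJ =
    alpha k kappa beta J * KK kappa (Ik k n) / KK kappa J.
Proof.
subst k.
have hkn' : (#|J| <= n)%N by exact: ltnW.
have hb : forall m : nat, (m < n)%N -> beta m != 0.
  move=> [|m] hm; first by rewrite hbeta0 oner_neq0.
  by apply: hbeta; rewrite hm.
rewrite /maxminor.
set M := matA _ _ _ _.
have -> : colsub (fun i : 'I_#|J| => enum_val (cast_ord (esym erefl) i)) M =
          colsub (fun i : 'I_#|J| => enum_val i) M.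
  by apply/matrixP => i j; rewrite !mxE cast_ord_id.
rewrite /M colsub_A //.
rewrite !det_mulmx !det_diag.
set y := fun p : 'I_#|J| => kappa (enum_val p).
have hW := det_Wm kappa y.
rewrite (Vd_Ik kappa hkn') in hW.
rewrite /y Vd_J in hW.
have hdd : forall a b : 'I_n, (a < b)%N -> dd kappa a b != 0.
  move=> a b hab; rewrite /dd expf_neq0 // subr_eq0; apply/eqP => /hkappa.
  move=> h; have := h (ltn_ord b) (ltn_ord a); move/eqP; by rewrite gtn_eqF.
have hCC : forall X Y : {set 'I_n}, CC kappa X Y != 0.
  move=> X Y; rewrite /CC; apply/prodf_neq0 => a _; apply/prodf_neq0 => b /andP [_ hab].
  exact: hdd.
have hKK : forall X : {set 'I_n}, KK kappa X != 0.
  move=> X; apply: contraNneq (hCC X X) => h; by rewrite -KK_sq h expr0n.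
have hBt : forall X : {set 'I_n}, Bt beta X != 0.
  move=> X; rewrite /Bt; apply/prodf_neq0 => a _; exact: hb.
have E1 : \prod_(i < #|J|) (\row_(i0 < #|J|) (beta i0 * qq #|J| kappa i0)) 0 i = \prod_(i < #|J|) (beta i * qq #|J| kappa i).
  by apply: eq_bigr => i _; rewrite mxE.
have E2 : \prod_(i < #|J|) (\row_(p < #|J|) (beta (enum_val p) * qq #|J| kappa (enum_val p) ^+ 2)^-1) 0 i
    = (\prod_(a in J) (beta a * qq #|J| kappa a ^+ 2))^-1.
  rewrite (big_enum_val (A := mem J)) -prodfV; apply: eq_bigr => i _; by rewrite mxE.
have EW : \det (Wm kappa y) = \prod_(i < #|J|) qq #|J| kappa i * KK kappa J / KK kappa (Ik #|J| n).
  apply: (mulIf (hKK (Ik #|J| n))); rewrite /y hW; field; exact: hKK.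
have E3 : \prod_(i < #|J|) (beta i * qq #|J| kappa i) * \prod_(i < #|J|) qq #|J| kappa i
    = \prod_(a in Ik #|J| n) (beta a * qq #|J| kappa a ^+ 2).
  rewrite -big_split /= /Ik.
  rewrite (eq_bigl (fun a : 'I_n => true && (a < #|J|)%N)); last by move=> a; rewrite inE.
  rewrite -(@big_ord_widen_cond _ _ _ #|J| n (fun _ => true) (fun a : nat => beta a * qq #|J| kappa a ^+ 2) hkn').
  by apply: eq_bigr => i _; rewrite expr2 mulrA.
have BQ : forall X : {set 'I_n}, \prod_(a in X) (beta a * qq #|J| kappa a ^+ 2)
    = Bt beta X * Pn kappa X (Ik #|J| n).
  move=> X; rewrite big_split /=; congr (_ * _).
  by apply: eq_bigr => a _; rewrite qq_sq.
rewrite E1 EW E2.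
transitivity ((\prod_(i < #|J|) (beta i * qq #|J| kappa i) * \prod_(i < #|J|) qq #|J| kappa i)
   * (\prod_(a in J) (beta a * qq #|J| kappa a ^+ 2))^-1 * KK kappa J / KK kappa (Ik #|J| n)).
  by ring.
rewrite E3 !BQ.
apply: sq_trick; try exact: hKK.
rewrite !KK_sq !Pn_CC.
set I := Ik #|J| n.
have hIk : CC kappa I I = CC kappa (J :&: I) (J :&: I) * CC kappa (J :&: I) (I :\: J)
    * CC kappa (I :\: J) (J :&: I) * CC kappa (I :\: J) (I :\: J).
  rewrite (CC_splitl _ I I J) (CC_splitr _ (I :&: J) I J) (CC_splitr _ (I :\: J) I J) (setIC I J).
  by ring.
have hJ : CC kappa J J = CC kappa (J :&: I) (J :&: I) * CC kappa (J :&: I) (J :\: I)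
    * CC kappa (J :\: I) (J :&: I) * CC kappa (J :\: I) (J :\: I).
  rewrite (CC_splitl _ J J I) (CC_splitr _ (J :&: I) J I) (CC_splitr _ (J :\: I) J I).
  by ring.
have hJI : CC kappa J I = CC kappa (J :&: I) (J :&: I) * CC kappa (J :&: I) (I :\: J)
    * CC kappa (J :\: I) (J :&: I) * CC kappa (J :\: I) (I :\: J).
  rewrite (CC_splitl _ J I I) (CC_splitr _ (J :&: I) I J) (CC_splitr _ (J :\: I) I J) (setIC I J).
  by ring.
have hIJ : CC kappa I J = CC kappa (J :&: I) (J :&: I) * CC kappa (J :&: I) (J :\: I)
    * CC kappa (I :\: J) (J :&: I) * CC kappa (I :\: J) (J :\: I).
  rewrite (CC_splitl _ I J J) (CC_splitr _ (I :&: J) J I) (CC_splitr _ (I :\: J) J I) (setIC I J).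
  by ring.
have hBI : Bt beta I = Bt beta (J :&: I) * Bt beta (I :\: J).
  by rewrite /Bt (big_setID J) (setIC I J).
have hBJ : Bt beta J = Bt beta (J :&: I) * Bt beta (J :\: I).
  by rewrite /Bt (big_setID I).
have hA : alpha #|J| kappa beta J = CC kappa (I :\: J) (I :\: J) * CC kappa (J :\: I) (J :\: I)
    / (CC kappa (I :\: J) (J :\: I) * CC kappa (J :\: I) (I :\: J))
    * (Bt beta (I :\: J) / Bt beta (J :\: I)).
  rewrite /alpha /= cross_CC //.
  move=> a b; rewrite !inE => /andP [ha1 ha2] /andP [hb1 hb2]; apply/eqP => e.
  by move: ha1; rewrite -e hb2.
rewrite hA hIk hJ hJI hIJ hBI hBJ.
field.
by rewrite !hCC !hBt.
Qed.
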